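(* Let $p_0,q\in\mathcal S^{d-1}$ with $p_0^\top q>0$, and consider the preference dynamics with the fixed recommendation $q_t=q$ for all $t\ge0$, i.e. $\tilde p_{t+1}=p_t+\eta_t\,(p_t^\top q)\,q$, $p_{t+1}=\tilde p_{t+1}/\|\tilde p_{t+1}\|_2$, with step sizes either constant ($\eta_t=\eta$) or decreasing ($\eta_t=\frac{\eta}{t+s}$). Let $R(T)=\sum_{t=0}^{T-1}(1-p_t^\top q)$. Then for every $T\ge 1$, \[R(T)\le C_\gamma\big((p_0^\top q)^{-2}-1\big),\qquad C_\gamma=\begin{cases}\frac{(\eta+1)^2}{\eta^2+2\eta}, & \eta_t=\eta,\\[2pt] \frac{s^2\pi^2}{6}, & \eta_t=\frac{\eta}{t+s}.\end{cases}\]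
   Context: $\mathcal S^{d-1}$ denotes the unit sphere in $\mathbb{R}^d$. In the constant step-size setting $\eta>0$ is a constant; in the decreasing step-size setting $\eta$ and $s$ are positive integers. $R(T)$ is the regret for the affinity reward $r_t=p_t^\top q_t$ relative to the maximal reward $1$. *)

(* Defs.v *)
From HB Require Import structures.
From mathcomp Require Import all_boot all_order all_algebra.
From mathcomp Require Import reals trigo.
Set Implicit Arguments. Unset Strict Implicit. Unset Printing Implicit Defensive.
Import Order.TTheory GRing.Theory Num.Theory.
Local Open Scope ring_scope.

Section Dyn.
Variables (R : realType) (d : nat).

Definition dotv (u v : 'rV[R]_d) : R := \sum_(i < d) u 0 i * v 0 i.

Definition norm2 (u : 'rV[R]_d) : R := Num.sqrt (dotv u u).

Definition on_sphere (u : 'rV[R]_d) : Prop := norm2 u = 1.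

Definition pref_step (eta_t : R) (q p : 'rV[R]_d) : 'rV[R]_d :=
  let pt := p + (eta_t * dotv p q) *: q in (norm2 pt)^-1 *: pt.

Fixpoint traj (eta : nat -> R) (q p0 : 'rV[R]_d) (t : nat) : 'rV[R]_d :=
  match t with
  | 0 => p0
  | t'.+1 => pref_step (eta t') q (traj eta q p0 t')
  end.

Definition regret (eta : nat -> R) (q p0 : 'rV[R]_d) (T : nat) : R :=
  \sum_(t < T) (1 - dotv (traj eta q p0 t) q).

End Dyn.

(* Main.v *)
Require Import Defs.
From HB Require Import structures.
From mathcomp Require Import all_boot all_order all_algebra.
From mathcomp Require Import reals trigo.
From mathcomp Require Import boolp classical_sets topology normedtype sequences.
From mathcomp Require Import ring lra.
Import Order.TTheory GRing.Theory Num.Theory.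
Import numFieldNormedType.Exports.
Local Open Scope ring_scope.

Section P.
Variable R : realType.

Lemma cos1_gt_half : 1/2 < cos (1:R).
Proof.
have h := @cvg_cos_coeff' R 1; rewrite -(cvg_lim (@Rhausdorff R) h).
apply: (@le_lt_trans _ _ (\sum_(0 <= i < 2) cos_coeff' 1 i)).
  rewrite big_nat_recr//= big_nat_recr//= big_nil add0r.
  rewrite /cos_coeff' expr0z expr1n fact0 !mul1r expr1n expr1z.
  rewrite /= (_ : (1.*2)`!%:R = 2 :> R) //; lra.
apply: lt_sum_lim_series; [by move/cvgP in h|move=> d].
rewrite /cos_coeff' !(expr1n,mulr1).
rewrite -muln2 -mulSn muln2 -exprnP -signr_odd odd_double expr0.
rewrite -exprnP -signr_odd oddD/= muln2 odd_double/= expr1 add2n.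
rewrite mulNr subr_gt0 2!div1r ltf_pV2 ?posrE ?ltr0n ?fact_gt0//.
by rewrite ltr_nat ltn_pfact//ltn_double doubleS.
Qed.

Lemma cos_pi3 : cos (pi / 3) = 1/2 :> R.
Proof.
set a := pi / 3 : R.
have ha : pi = a + a + a by rewrite /a; field.
have e := cos2Dsin2 a.
have c3 : cos pi = 4 * cos a ^+ 3 - 3 * cos a.
  have s2 : sin a ^+ 2 = 1 - cos a ^+ 2 by rewrite -e addrAC subrr add0r.
  rewrite ha !cosD sinD.
  transitivity (cos a ^+ 3 - 3 * cos a * sin a ^+ 2); first ring.
  rewrite s2; ring.
rewrite cospi in c3.
have cpos : 0 < cos a.
  apply: cos_gt0_pihalf; have := pi_gt0 R; rewrite /a => hp; apply/andP; split; lra.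
have : (cos a + 1) * (2 * cos a - 1) ^+ 2 = 0.
  have -> : (cos a + 1) * (2 * cos a - 1) ^+ 2 = 4 * cos a ^+ 3 - 3 * cos a + 1 by ring.
  by rewrite -c3; ring.
move/eqP; rewrite mulf_eq0 => /orP[/eqP h|]; first lra.
rewrite sqrf_eq0 => /eqP h; lra.
Qed.

Lemma pi_gt3 : 3 < pi :> R.
Proof.
have hp := pi_ge2 R.
have h1 : (1:R) \in `[0, pi] by rewrite in_itv /=; apply/andP; split; lra.
have h2 : (pi / 3 : R) \in `[0, pi] by rewrite in_itv /=; apply/andP; split; lra.
have H := ltr_cos h1 h2.
rewrite cos_pi3 cos1_gt_half in H.
have h3 := esym H.
lra.
Qed.
End P.

Section D.
Variables (R : realType) (d : nat).
Implicit Types (u v w : 'rV[R]_d).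

Lemma dotvC u v : dotv u v = dotv v u.
Proof. by rewrite /dotv; apply: eq_bigr => i _; rewrite mulrC. Qed.

Lemma dotvDl u v w : dotv (u + v) w = dotv u w + dotv v w.
Proof. by rewrite /dotv -big_split; apply: eq_bigr => i _; rewrite mxE mulrDl. Qed.

Lemma dotvZl (a : R) u w : dotv (a *: u) w = a * dotv u w.
Proof. by rewrite /dotv mulr_sumr; apply: eq_bigr => i _; rewrite mxE mulrA. Qed.

Lemma dotv_ge0 u : 0 <= dotv u u.
Proof. by rewrite /dotv; apply: sumr_ge0 => i _; rewrite -expr2 sqr_ge0. Qed.

Lemma sphere_dot u : on_sphere u -> dotv u u = 1.
Proof.
rewrite /on_sphere /norm2 => h.
by have := sqr_sqrtr (dotv_ge0 u); rewrite h expr1n.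
Qed.

Lemma dot_le1 u v : dotv u u = 1 -> dotv v v = 1 -> dotv u v <= 1.
Proof.
move=> hu hv.
have := dotv_ge0 (u + (-1) *: v).
rewrite !dotvDl !dotvZl (dotvC v (u + _)) (dotvC u (u + _)) !dotvDl !dotvZl.
rewrite hu hv (dotvC v u) => h; lra.
Qed.

Lemma y_ge0 u v : dotv u u = 1 -> dotv v v = 1 -> 0 < dotv u v ->
  0 <= (dotv u v) ^- 2 - 1.
Proof.
move=> hu hv hx; have h1 := dot_le1 _ _ hu hv.
rewrite subr_ge0 invf_ge1 ?exprn_gt0 //.
by rewrite exprn_ile1 // ltW.
Qed.

Lemma regret_term (x : R) : 0 < x -> 1 - x <= (x ^- 2 - 1) / 2.
Proof.
move=> hx; rewrite -subr_ge0.
have -> : (x ^- 2 - 1) / 2 - (1 - x) = (1 - x) ^+ 2 * (1 + 2 * x) / (2 * x ^+ 2).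
  by field; rewrite gt_eqF.
apply: divr_ge0; last by rewrite mulr_ge0 // sqr_ge0.
by apply: mulr_ge0; [rewrite sqr_ge0 | lra].
Qed.

Lemma step_inv (e : R) (q p : 'rV[R]_d) : dotv q q = 1 -> dotv p p = 1 -> 0 < dotv p q -> 0 <= e ->
  [/\ dotv (pref_step e q p) (pref_step e q p) = 1, 0 < dotv (pref_step e q p) q &
   (dotv (pref_step e q p) q) ^- 2 - 1 = ((dotv p q) ^- 2 - 1) / (1 + e) ^+ 2].
Proof.
move=> hq hp hx he.
rewrite /pref_step.
set x := dotv p q.
set pt := p + (e * x) *: q.
have hptq : dotv pt q = (1 + e) * x by rewrite /pt dotvDl dotvZl hq -/x; ring.
have hptp : dotv pt pt = 1 + (e ^+ 2 + 2 * e) * x ^+ 2.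
  rewrite {1}/pt dotvDl dotvZl dotvC [dotv q pt]dotvC hptq /pt dotvDl dotvZl hp.
  rewrite (dotvC q p) -/x; ring.
have hpos : 0 < dotv pt pt.
  rewrite hptp; apply: (lt_le_trans ltr01); rewrite lerDl.
  by apply: mulr_ge0; [apply: addr_ge0; [apply: sqr_ge0 | lra] | apply: sqr_ge0].
set N := norm2 pt.
have hN2 : N ^+ 2 = dotv pt pt by rewrite /N /norm2 sqr_sqrtr // ltW.
have hN : 0 < N by rewrite /N /norm2 sqrtr_gt0.
have hNz : N != 0 by rewrite gt_eqF.
have hx0 : x != 0 by rewrite gt_eqF.
have he0 : 1 + e != 0 by rewrite gt_eqF //; lra.
split.
- rewrite dotvZl dotvC dotvZl -hN2; field; exact: hNz.
- by rewrite dotvZl hptq; apply: mulr_gt0; [rewrite invr_gt0 | apply: mulr_gt0 => //; lra].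
- rewrite dotvZl hptq exprMn exprVn hN2 hptp exprMn.
  by field; rewrite he0 hx0 -hptp gt_eqF.
Qed.


Lemma traj_inv (eta : nat -> R) (q p0 : 'rV[R]_d) :
  dotv q q = 1 -> dotv p0 p0 = 1 -> 0 < dotv p0 q -> (forall t, 0 <= eta t) ->
  forall t, dotv (traj eta q p0 t) (traj eta q p0 t) = 1 /\ 0 < dotv (traj eta q p0 t) q.
Proof.
move=> hq hp hx he; elim=> [|t [h1 h2]] //=.
by have [a b _] := step_inv (eta t) q _ hq h1 h2 (he t).
Qed.

Lemma traj_y (eta : nat -> R) (q p0 : 'rV[R]_d) :
  dotv q q = 1 -> dotv p0 p0 = 1 -> 0 < dotv p0 q -> (forall t, 0 <= eta t) ->
  forall t, (dotv (traj eta q p0 t.+1) q) ^- 2 - 1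
            = ((dotv (traj eta q p0 t) q) ^- 2 - 1) / (1 + eta t) ^+ 2.
Proof.
move=> hq hp hx he t; have [h1 h2] := traj_inv _ _ _ hq hp hx he t.
by have [_ _ c] := step_inv (eta t) q _ hq h1 h2 (he t).
Qed.

Lemma regret_le (eta : nat -> R) (q p0 : 'rV[R]_d) T :
  dotv q q = 1 -> dotv p0 p0 = 1 -> 0 < dotv p0 q -> (forall t, 0 <= eta t) ->
  regret eta q p0 T <= \sum_(t < T) ((dotv (traj eta q p0 t) q) ^- 2 - 1) / 2.
Proof.
move=> hq hp hx he; rewrite /regret; apply: ler_sum => t _.
by apply: regret_term; have [] := traj_inv _ _ _ hq hp hx he t.
Qed.

End D.
Arguments sphere_dot {R d}.
Arguments y_ge0 {R d}.
Arguments traj_y {R d}.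
Arguments traj_inv {R d}.
Arguments regret_le {R d}.

Lemma geom_le (R : realType) (r : R) T : 0 <= r < 1 -> \sum_(t < T) r ^+ t <= (1 - r)^-1.
Proof.
move=> /andP[r0 r1].
have e : (1 - r) * \sum_(t < T) r ^+ t = 1 - r ^+ T.
  elim: T => [|T IH]; first by rewrite big_ord0 expr0; ring.
  by rewrite big_ord_recr /= mulrDr IH exprS; ring.
have hr : 1 - r != 0 by rewrite gt_eqF //; lra.
have -> : \sum_(t < T) r ^+ t = (1 - r)^-1 * (1 - r ^+ T) by rewrite -e mulKf.
apply: ler_piMr; first by rewrite invr_ge0; lra.
rewrite gerBl; exact: exprn_ge0.
Qed.

Lemma sum_inv_sq (R : realType) T : \sum_(t < T) (((t + 1)%:R : R) ^+ 2)^-1 <= 2 - 2 / (T + 1)%:R.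
Proof.
elim: T => [|T IH]; first by rewrite big_ord0 (_ : ((0+1)%:R : R) = 1) // divr1; lra.
rewrite big_ord_recr /=.
apply: (le_trans (lerD IH (lexx _))).
set n : R := (T + 1)%:R.
have -> : ((T.+1 + 1)%:R : R) = n + 1 by rewrite /n natr1 addSn.
have hn : 1 <= n by rewrite /n ler1n addn1.
rewrite -subr_ge0.
have -> : 2 - 2 / (n + 1) - (2 - 2 / n + (n ^+ 2)^-1) = (n - 1) / (n ^+ 2 * (n + 1)).
  by field; rewrite ?gt_eqF //; lra.
apply: divr_ge0; first lra.
apply: mulr_ge0; [exact: sqr_ge0 | lra].
Qed.


Theorem proposition2 (R : realType) (d : nat) (p0 q : 'rV[R]_d) :
  on_sphere p0 -> on_sphere q -> 0 < dotv p0 q ->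
  (* constant step size eta_t = eta > 0 *)
  (forall eta : R, 0 < eta -> forall T : nat, (1 <= T)%N ->
     regret (fun _ => eta) q p0 T
       <= (eta + 1) ^+ 2 / (eta ^+ 2 + 2 * eta) * ((dotv p0 q) ^- 2 - 1))
  /\
  (* decreasing step size eta_t = eta / (t + s), eta s positive integers *)
  (forall eta s : nat, (0 < eta)%N -> (0 < s)%N -> forall T : nat, (1 <= T)%N ->
     regret (fun t => eta%:R / (t + s)%:R) q p0 T
       <= (s%:R ^+ 2 * pi ^+ 2 / 6) * ((dotv p0 q) ^- 2 - 1)).
Proof.
move=> hp hq hx.
have hp1 := sphere_dot _ hp; have hq1 := sphere_dot _ hq.
have hy0 := y_ge0 _ _ hp1 hq1 hx.
split.
- move=> eta he T _.
  have hE : forall t : nat, 0 <= (fun _ => eta) t by move=> _; exact: ltW.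
  set y0 := (dotv p0 q) ^- 2 - 1 in hy0 *.
  set r : R := ((1 + eta) ^+ 2)^-1.
  have hyt : forall t, (dotv (traj (fun _ => eta) q p0 t) q) ^- 2 - 1 = y0 * r ^+ t.
    elim => [|t IH]; first by rewrite expr0 mulr1.
    by rewrite (traj_y _ _ _ hq1 hp1 hx hE) IH [r ^+ _.+1]exprS /r /=; ring.
  have h1 : 1 < (1 + eta) ^+ 2 by clear hE hyt; rewrite exprn_egt1 //; lra.
  have hr : 0 <= r < 1.
    by rewrite /r invr_ge0 invf_lt1 ?h1 ?andbT; [apply: ltW | ]; apply: lt_trans h1.
  apply: le_trans (regret_le _ _ _ T hq1 hp1 hx hE) _.
  apply: (@le_trans _ _ (\sum_(t < T) y0 * r ^+ t)).
    apply: ler_sum => t _; rewrite hyt.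
    have : 0 <= y0 * r ^+ t by apply: mulr_ge0 => //; apply: exprn_ge0; case/andP: hr.
    clear hE hyt; lra.
  rewrite -mulr_sumr.
  apply: le_trans (ler_wpM2l hy0 (geom_le _ _ T hr)) _.
  have -> : (1 - r)^-1 = (eta + 1) ^+ 2 / (eta ^+ 2 + 2 * eta).
    rewrite /r; field.
    have e1 : 0 < eta ^+ 2 + 2 * eta by apply: addr_gt0; [apply: exprn_gt0 | apply: mulr_gt0].
    by rewrite !gt_eqF //; clear hE hyt; lra.
  by rewrite mulrC.
- move=> eta s heta hs T _.
  set et := fun t : nat => eta%:R / (t + s)%:R : R.
  have hE : forall t : nat, 0 <= et t by move=> t; rewrite /et divr_ge0.
  set y0 := (dotv p0 q) ^- 2 - 1 in hy0 *.
  have hyge0 : forall t, 0 <= (dotv (traj et q p0 t) q) ^- 2 - 1.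
    by move=> t; have [a b] := traj_inv _ _ _ hq1 hp1 hx hE t; apply: y_ge0.
  have inv : forall t, ((dotv (traj et q p0 t) q) ^- 2 - 1) * ((t + s)%:R) ^+ 2 <= y0 * (s%:R) ^+ 2.
    elim => [|t IH]; first by rewrite add0n.
    rewrite (traj_y _ _ _ hq1 hp1 hx hE) /et.
    set a : R := (t + s)%:R.
    have ha : 0 < a by rewrite /a ltr0n addn_gt0 hs orbT.
    have hn : 1 <= (eta%:R : R) by rewrite ler1n.
    have -> : ((t.+1 + s)%:R : R) = a + 1 by rewrite /a natr1 addSn.
    set yt := (dotv (traj et q p0 t) q) ^- 2 - 1 in IH *.
    have hyt : 0 <= yt by apply: hyge0.
    have -> : yt / (1 + eta%:R / a) ^+ 2 * (a + 1) ^+ 2 = (yt * a ^+ 2) * ((a + 1) / (a + eta%:R)) ^+ 2.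
      by field; rewrite ?gt_eqF //; lra.
    apply: le_trans IH.
    apply: ler_piMr; first by apply: mulr_ge0 => //; apply: sqr_ge0.
    apply: exprn_ile1; first by apply: divr_ge0; lra.
    by rewrite ler_pdivrMr ?mul1r; lra.
  apply: le_trans (regret_le _ _ _ T hq1 hp1 hx hE) _.
  apply: (@le_trans _ _ (\sum_(t < T) (y0 * s%:R ^+ 2 / 2) * ((t + 1)%:R ^+ 2)^-1)).
    apply: ler_sum => t _.
    set yt := (dotv (traj et q p0 t) q) ^- 2 - 1.
    have ha : 0 < ((t + s)%:R : R) by rewrite ltr0n addn_gt0 hs orbT.
    have hb : 0 < ((t + 1)%:R : R) by rewrite ltr0n addn1.
    have h1 : yt <= y0 * s%:R ^+ 2 / ((t + s)%:R ^+ 2) by rewrite ler_pdivlMr ?exprn_gt0 //; apply: inv.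
    have h2 : y0 * s%:R ^+ 2 / ((t + s)%:R ^+ 2) <= y0 * s%:R ^+ 2 / ((t + 1)%:R ^+ 2).
      apply: ler_wpM2l; first by apply: mulr_ge0 => //; apply: sqr_ge0.
      rewrite lef_pV2 ?posrE ?exprn_gt0 //.
      by apply: lerXn2r; rewrite ?nnegrE ?ler0n // ler_nat leq_add2l.
    have -> : y0 * s%:R ^+ 2 / 2 / (t + 1)%:R ^+ 2 = (y0 * s%:R ^+ 2 / (t + 1)%:R ^+ 2) / 2 by field; rewrite natr1 pnatr_eq0.
    lra.
  rewrite -mulr_sumr.
  have hsum := sum_inv_sq R T.
  have hc : 0 <= y0 * s%:R ^+ 2 / 2 by apply: divr_ge0 => //; apply: mulr_ge0 => //; apply: sqr_ge0.
  have hsum2 : \sum_(t < T) ((t + 1)%:R ^+ 2)^-1 <= 2 :> R.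
    by apply: le_trans hsum _; rewrite gerBl divr_ge0 ?ler0n.
  apply: le_trans (ler_wpM2l hc hsum2) _.
  have hpi : 1 <= pi ^+ 2 / 6 :> R.
    have h3 := pi_gt3 R.
    rewrite ler_pdivlMr // mul1r.
    apply: (@le_trans _ _ (3 ^+ 2)); first by rewrite expr2; lra.
    by apply: lerXn2r; rewrite ?nnegrE //; lra.
  have -> : s%:R ^+ 2 * pi ^+ 2 / 6 * y0 = (y0 * s%:R ^+ 2) * (pi ^+ 2 / 6) by ring.
  have -> : y0 * s%:R ^+ 2 / 2 * 2 = y0 * s%:R ^+ 2 by field.
  by apply: ler_peMr => //; apply: mulr_ge0 => //; apply: sqr_ge0.
Qed.
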